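(* Let $(A_1,A_2,A_3)$ take values in $\{0,1\}^3$ with a palindromic distribution $p$ (i.e. $p(a)=p(\sim a)$ for all $a$) with $p(a)>0$ for all $a$. Let $\lambda_{12}=2^{-3}\sum_{a\in\{0,1\}^3}(-1)^{a_1+a_2}\log p(a)$ be the two-factor log-linear interaction of $A_1,A_2$; let $\rho_{12|3}$ be the correlation of $A_1$ and $A_2$ in the conditional distribution given $A_3=0$ (which equals the conditional correlation given $A_3=1$); let $\rho_{st}$ denote the marginal Pearson correlation of $A_s,A_t$ and $\rho_{12.3}=(\rho_{12}-\rho_{13}\rho_{23})/\{(1-\rho_{13}^2)(1-\rho_{23}^2)\}^{1/2}$ the partial correlation. Then (i) $A_1\perp\!\!\!\perp A_2\mid A_3 \iff \lambda_{12}=0\iff \rho_{12|3}=0\iff\rho_{12.3}=0$; (ii) the conditional dependence of $A_1,A_2$ given $A_3$ is positive $\iff\lambda_{12}>0\iff\rho_{12|3}>0\iff\rho_{12.3}>0$; (iii) the conditional dependence of $A_1,A_2$ given $A_3$ is negative $\iff\lambda_{12}<0\iff\rho_{12|3}<0\iff\rho_{12.3}<0$.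
   Context: $\sim a$ denotes the complement of the binary vector $a$. A conditional dependence of $A_1,A_2$ given $A_3$ is called positive (negative) if the conditional correlation $\rho_{12|3}$ is positive (negative), equivalently if the conditional odds-ratio is $>1$ ($<1$). *)

(* Defs.v *)
From Stdlib Require Import Reals.
Open Scope R_scope.

(* A distribution of (A1,A2,A3) on {0,1}^3 is a function p : bool -> bool -> bool -> R;
   the boolean value [true] encodes 1 and [false] encodes 0. *)
Definition dist3 := bool -> bool -> bool -> R.

Definition b2R (b : bool) : R := if b then 1 else 0.

Definition sumB (f : bool -> R) : R := f false + f true.
Definition sum3 (f : bool -> bool -> bool -> R) : R :=
  sumB (fun a1 => sumB (fun a2 => sumB (fun a3 => f a1 a2 a3))).

Definition is_distribution (p : dist3) : Prop :=
  (forall a1 a2 a3, 0 <= p a1 a2 a3) /\ sum3 p = 1.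

Definition palindromic (p : dist3) : Prop :=
  forall a1 a2 a3, p a1 a2 a3 = p (negb a1) (negb a2) (negb a3).

Definition X1 : bool -> bool -> bool -> R := fun a1 _ _ => b2R a1.
Definition X2 : bool -> bool -> bool -> R := fun _ a2 _ => b2R a2.
Definition X3 : bool -> bool -> bool -> R := fun _ _ a3 => b2R a3.

Definition Ex (p : dist3) (f : bool -> bool -> bool -> R) : R :=
  sum3 (fun a1 a2 a3 => p a1 a2 a3 * f a1 a2 a3).
Definition cov (p : dist3) (f g : bool -> bool -> bool -> R) : R :=
  Ex p (fun a1 a2 a3 => f a1 a2 a3 * g a1 a2 a3) - Ex p f * Ex p g.
Definition corr (p : dist3) (f g : bool -> bool -> bool -> R) : R :=
  cov p f g / sqrt (cov p f f * cov p g g).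

Definition pA3 (p : dist3) (c : bool) : R := sumB (fun a1 => sumB (fun a2 => p a1 a2 c)).
Definition cond3 (p : dist3) (c : bool) : dist3 :=
  fun a1 a2 a3 => if Bool.eqb a3 c then p a1 a2 a3 / pA3 p c else 0.

Definition sgn2 (a1 a2 : bool) : R := if Bool.eqb a1 a2 then 1 else -1. (* (-1)^(a1+a2) *)
Definition lambda12 (p : dist3) : R :=
  / 8 * sum3 (fun a1 a2 a3 => sgn2 a1 a2 * ln (p a1 a2 a3)).

Definition rho12 (p : dist3) : R := corr p X1 X2.
Definition rho13 (p : dist3) : R := corr p X1 X3.
Definition rho23 (p : dist3) : R := corr p X2 X3.

Definition rho12_given3 (p : dist3) : R := corr (cond3 p false) X1 X2.

Definition partial_rho12_3 (p : dist3) : R :=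
  (rho12 p - rho13 p * rho23 p) / sqrt ((1 - rho13 p ^ 2) * (1 - rho23 p ^ 2)).

Definition cond_indep12_3 (p : dist3) : Prop :=
  forall a1 a2 c,
    p a1 a2 c * pA3 p c = sumB (fun b2 => p a1 b2 c) * sumB (fun b1 => p b1 a2 c).

Definition cond_odds_ratio (p : dist3) (c : bool) : R :=
  (p true true c * p false false c) / (p true false c * p false true c).

Definition cond_dep_positive (p : dist3) : Prop := forall c, 1 < cond_odds_ratio p c.
Definition cond_dep_negative (p : dist3) : Prop := forall c, cond_odds_ratio p c < 1.

(* Main.v *)
Require Import Defs.
From Stdlib Require Import Reals Lra.
Open Scope R_scope.

Definition SG (Q D : R) : Prop := (Q = 0 <-> D = 0) /\ (0 < Q <-> 0 < D) /\ (Q < 0 <-> D < 0).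

Lemma SG_mul k Q D : 0 < k -> Q = k * D -> SG Q D.
Proof.
  intros Hk ->. unfold SG.
  destruct (Rtotal_order D 0) as [h|[h|h]].
  - assert (k * D < 0) by (apply Rmult_pos_neg; lra). lra.
  - subst. rewrite Rmult_0_r. lra.
  - assert (0 < k * D) by (apply Rmult_lt_0_compat; lra). lra.
Qed.

Lemma SG_ln x y : 0 < x -> 0 < y -> SG (ln x - ln y) (x - y).
Proof.
  intros Hx Hy. unfold SG.
  destruct (Rtotal_order x y) as [h|[h|h]].
  - pose proof (ln_increasing _ _ Hx h). lra.
  - subst. lra.
  - pose proof (ln_increasing _ _ Hy h). lra.
Qed.

Lemma SG_scale k Q D : 0 < k -> SG Q D -> SG (k * Q) D.
Proof.
  intros Hk H. assert (SG (k*Q) Q) by (apply (SG_mul k); auto).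
  unfold SG in *. tauto.
Qed.

Lemma odds_SG x y : 0 < y -> SG (x / y - 1) (x - y).
Proof. intros Hy. apply (SG_mul (/ y)). apply Rinv_0_lt_compat; lra. field. lra. Qed.

Theorem proposition3p1 (p : dist3) :
  is_distribution p ->
  palindromic p ->
  (forall a1 a2 a3, 0 < p a1 a2 a3) ->
  ((cond_indep12_3 p <-> lambda12 p = 0) /\
   (lambda12 p = 0 <-> rho12_given3 p = 0) /\
   (rho12_given3 p = 0 <-> partial_rho12_3 p = 0)) /\
  ((cond_dep_positive p <-> 0 < lambda12 p) /\
   (0 < lambda12 p <-> 0 < rho12_given3 p) /\
   (0 < rho12_given3 p <-> 0 < partial_rho12_3 p)) /\
  ((cond_dep_negative p <-> lambda12 p < 0) /\
   (lambda12 p < 0 <-> rho12_given3 p < 0) /\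
   (rho12_given3 p < 0 <-> partial_rho12_3 p < 0)).
Proof.
  intros [_ Hsum] Hpal Hpos.
  assert (E1 : p true true true = p false false false) by (rewrite Hpal; reflexivity).
  assert (E2 : p false false true = p true true false) by (rewrite Hpal; reflexivity).
  assert (E3 : p true false true = p false true false) by (rewrite Hpal; reflexivity).
  assert (E4 : p false true true = p true false false) by (rewrite Hpal; reflexivity).
  assert (Ha := Hpos false false false). assert (Hb := Hpos true true false).
  assert (Hc := Hpos false true false). assert (Hd := Hpos true false false).
  set (a := p false false false) in *. set (b := p true true false) in *.
  set (c := p false true false) in *. set (d := p true false false) in *.
  assert (Hs : a + b + c + d = / 2).
  { unfold sum3, sumB in Hsum. rewrite E1, E2, E3, E4 in Hsum. fold a b c d in Hsum. lra. }
  set (D := a * b - c * d).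
  assert (HL : SG (lambda12 p) D).
  { assert (lambda12 p = / 4 * (ln (a*b) - ln (c*d))).
    { unfold lambda12, sum3, sumB, sgn2. simpl. rewrite E1, E2, E3, E4. fold a b c d.
      rewrite !ln_mult by lra. field. }
    rewrite H. apply SG_scale; [lra|]. apply SG_ln; apply Rmult_lt_0_compat; lra. }
  assert (HR : SG (rho12_given3 p) D).
  { unfold rho12_given3, corr.
    assert (Hs2 : a + c + (d + b) = / 2) by lra.
    assert (C12 : cov (cond3 p false) X1 X2 = 4 * D).
    { unfold cov, Ex, sum3, sumB, cond3, X1, X2, pA3, b2R. simpl. fold a b c d.
      unfold sumB; simpl; fold a b c d; rewrite Hs2. unfold D. replace d with (/2 - a - b - c) by lra. field. }
    assert (C11 : cov (cond3 p false) X1 X1 = 4 * ((d+b)*(a+c))).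
    { unfold cov, Ex, sum3, sumB, cond3, X1, X2, pA3, b2R. simpl. fold a b c d.
      unfold sumB; simpl; fold a b c d; rewrite Hs2. replace d with (/2 - a - b - c) by lra. field. }
    assert (C22 : cov (cond3 p false) X2 X2 = 4 * ((c+b)*(a+d))).
    { unfold cov, Ex, sum3, sumB, cond3, X1, X2, pA3, b2R. simpl. fold a b c d.
      unfold sumB; simpl; fold a b c d; rewrite Hs2. replace d with (/2 - a - b - c) by lra. field. }
    rewrite C12, C11, C22.
    assert (0 < sqrt (4 * ((d + b) * (a + c)) * (4 * ((c + b) * (a + d))))).
    { apply sqrt_lt_R0. apply Rmult_lt_0_compat; apply Rmult_lt_0_compat; try lra;
      apply Rmult_lt_0_compat; lra. }
    apply (SG_mul (4 / sqrt (4 * ((d + b) * (a + c)) * (4 * ((c + b) * (a + d)))))).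
    - apply Rdiv_lt_0_compat; lra.
    - field. lra. }
  assert (HP : SG (partial_rho12_3 p) D).
  { assert (S4 : sqrt (/4 * /4) = /4) by (rewrite sqrt_square; lra).
    assert (V1 : cov p X1 X1 = /4).
    { unfold cov, Ex, sum3, sumB, X1, b2R. simpl. rewrite E1, E2, E3, E4. fold a b c d.
      replace d with (/2 - a - b - c) by lra. field. }
    assert (V2 : cov p X2 X2 = /4).
    { unfold cov, Ex, sum3, sumB, X2, b2R. simpl. rewrite E1, E2, E3, E4. fold a b c d.
      replace d with (/2 - a - b - c) by lra. field. }
    assert (V3 : cov p X3 X3 = /4).
    { unfold cov, Ex, sum3, sumB, X3, b2R. simpl. rewrite E1, E2, E3, E4. fold a b c d.
      replace d with (/2 - a - b - c) by lra. field. }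
    assert (R12 : rho12 p = 4 * (a + b) - 1).
    { unfold rho12, corr. rewrite V1, V2, S4.
      unfold cov, Ex, sum3, sumB, X1, X2, b2R. simpl. rewrite E1, E2, E3, E4. fold a b c d.
      replace d with (/2 - a - b - c) by lra. field. }
    assert (R13 : rho13 p = 4 * (a + c) - 1).
    { unfold rho13, corr. rewrite V1, V3, S4.
      unfold cov, Ex, sum3, sumB, X1, X3, b2R. simpl. rewrite E1, E2, E3, E4. fold a b c d.
      replace d with (/2 - a - b - c) by lra. field. }
    assert (R23 : rho23 p = 4 * (a + d) - 1).
    { unfold rho23, corr. rewrite V2, V3, S4.
      unfold cov, Ex, sum3, sumB, X2, X3, b2R. simpl. rewrite E1, E2, E3, E4. fold a b c d.
      replace d with (/2 - a - b - c) by lra. field. }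
    unfold partial_rho12_3. rewrite R12, R13, R23.
    set (Q := sqrt ((1 - (4 * (a + c) - 1) ^ 2) * (1 - (4 * (a + d) - 1) ^ 2))).
    assert (HQ : 0 < Q).
    { apply sqrt_lt_R0. apply Rmult_lt_0_compat.
      - replace (1 - (4 * (a + c) - 1) ^ 2) with ((2 - 4*(a+c)) * (4*(a+c))) by ring.
        apply Rmult_lt_0_compat; lra.
      - replace (1 - (4 * (a + d) - 1) ^ 2) with ((2 - 4*(a+d)) * (4*(a+d))) by ring.
        apply Rmult_lt_0_compat; lra. }
    apply (SG_mul (16 / Q)). apply Rdiv_lt_0_compat; lra.
    unfold D. replace d with (/2 - a - b - c) by lra. field. lra. }
  assert (HCI : cond_indep12_3 p <-> D = 0).
  { unfold cond_indep12_3, pA3, sumB. split.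
    - intros H. specialize (H false false false). fold a b c d in H.
      assert (D = a * (a + c + (d + b)) - (a + c) * (a + d)) by (unfold D; ring). lra.
    - intros HD a1 a2 c0. destruct a1, a2, c0; rewrite ?E1, ?E2, ?E3, ?E4; fold a b c d;
      unfold D in HD; nra. }
  assert (HO : forall c0, SG (cond_odds_ratio p c0 - 1) D).
  { intros c0. destruct c0; unfold cond_odds_ratio; rewrite ?E1, ?E2, ?E3, ?E4; fold a b c d.
    - replace (a * b / (c * d)) with ((a*b)/(c*d)) by reflexivity.
      pose proof (odds_SG (a*b) (c*d)) as H. unfold D.
      replace (a * b / (c * d)) with (a * b / (c * d)) by ring. apply H.
      apply Rmult_lt_0_compat; lra.
    - replace (b * a / (d * c)) with (a * b / (c * d)) by (field; lra).
      unfold D. apply odds_SG. apply Rmult_lt_0_compat; lra. }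
  assert (HPos : cond_dep_positive p <-> 0 < D).
  { unfold cond_dep_positive. split.
    - intros H. specialize (H false). apply (proj1 (proj2 (HO false))). lra.
    - intros H c0. assert (0 < cond_odds_ratio p c0 - 1) by (apply (proj1 (proj2 (HO c0))); lra). lra. }
  assert (HNeg : cond_dep_negative p <-> D < 0).
  { unfold cond_dep_negative. split.
    - intros H. specialize (H false). apply (proj2 (proj2 (HO false))). lra.
    - intros H c0. assert (cond_odds_ratio p c0 - 1 < 0) by (apply (proj2 (proj2 (HO c0))); lra). lra. }
  clearbody D. unfold SG in *. clear -HL HR HP HCI HPos HNeg. tauto.
Qed.
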